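(* Let $n\ge1$, let $\vec x=x_1,\dots,x_n$ be variables, and let $\sigma$ be a symmetry of the pseudo-Boolean formula $\mathcal{C}$ with support $\{x_{i_1},\dots,x_{i_k}\}$, $i_1<\dots<i_k$. Let $\mathcal{D}$ be a formula containing the circuit constraints for $\sigma$ defined below, and let $C\doteq t_k\ge1$. Then the proof goal $\mathcal{C}\cup\mathcal{D}\cup\{\neg C\}\cup\mathcal{S}(\vec x{\upharpoonright}_\sigma,\vec x,\vec a,\vec d)\vdash\{d_n\ge1\}$ can be shown, i.e., a contradiction $0\ge1$ can be derived from $\mathcal{C}\cup\mathcal{D}\cup\{\bar t_k\ge1\}\cup\mathcal{S}(\vec x{\upharpoonright}_\sigma,\vec x,\vec a,\vec d)\cup\{\bar d_n\ge1\}$, using $O(k)$ RUP steps and cutting planes steps, where the RUP steps require $O(n)$ propagations in total.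
   Context: Literals are $x$ or $\bar x=1-x$; PB constraints $\sum_i c_i\ell_i\ge A$; $\neg(\sum c_i\ell_i\ge A)\doteq\sum c_i\bar\ell_i\ge\sum c_i-A+1$. A symmetry $\sigma$ is a permutation of literals with $\sigma(\bar\ell)=\overline{\sigma(\ell)}$ and finite support $\{x:\sigma(x)\ne x\}$, such that $\mathcal{C}{\upharpoonright}_\sigma$ equals $\mathcal{C}$ syntactically. Lexicographic-order specification $\mathcal{S}(\vec u,\vec v,\vec a,\vec d)$ over $n$ variables: $\bar a_1+u_1+\bar v_1\ge1$; $2a_1+\bar u_1+v_1\ge2$; for $1\le i\le n-2$: $3\bar a_{i+1}+2a_i+u_{i+1}+\bar v_{i+1}\ge3$, $2a_{i+1}+2\bar a_i+\bar u_{i+1}+v_{i+1}\ge2$; $\bar d_1+v_1+\bar u_1\ge1$; $2d_1+\bar v_1+u_1\ge2$; for $1\le i\le n-1$: $4\bar d_{i+1}+3d_i+\bar a_i+v_{i+1}+\bar u_{i+1}\ge4$, $4d_{i+1}+3\bar d_i+a_i+\bar v_{i+1}+u_{i+1}\ge3$. $\mathcal{S}(\vec x{\upharpoonright}_\sigma,\vec x,\vec a,\vec d)$ substitutes $u_i\mapsto\sigma(x_i)$, $v_i\mapsto x_i$; the auxiliary variables $a_i,d_i$ are fresh. Circuit constraints for $\sigma$ (fresh variables $s_1..s_{k-1}$, $t_1..t_k$, writing $p_j=x_{i_j}$, $q_j=\sigma(x_{i_j})$): $\bar s_1+p_1+\bar q_1\ge1$; $2s_1+\bar p_1+q_1\ge2$;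 for $1\le j\le k-2$: $3\bar s_{j+1}+2s_j+p_{j+1}+\bar q_{j+1}\ge3$, $2s_{j+1}+2\bar s_j+\bar p_{j+1}+q_{j+1}\ge2$; $\bar t_1+q_1+\bar p_1\ge1$; $2t_1+\bar q_1+p_1\ge2$; for $1\le j\le k-1$: $4\bar t_{j+1}+3t_j+\bar s_j+q_{j+1}+\bar p_{j+1}\ge4$, $3t_{j+1}+3\bar t_j+s_j+\bar q_{j+1}+p_{j+1}\ge3$. A cutting planes step derives a new constraint from a bounded number of available constraints and literal axioms using addition, positive multiplication, division with rounding up, saturation and weakening. A RUP step derives $D$ if unit propagation on the available constraints together with $\neg D$ reaches a conflict (unit propagation: a constraint with negative slack $\sum_{i:\rho(\ell_i)\ne0}c_i-A$ under partial assignment $\rho$ is a conflict; an unassigned literal whose coefficient exceeds the slack is set to true). *)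

(* Defs.v *)
From Stdlib Require Import ZArith List Permutation.
Import ListNotations.
Open Scope Z_scope.

Definition var := nat.
Definition lit := (var * bool)%type.
Definition posl (v : var) : lit := (v, true).
Definition negl (v : var) : lit := (v, false).
Definition lneg (l : lit) : lit := (fst l, negb (snd l)).

(** A PB constraint  sum_i c_i l_i >= A, written as a list of (c_i, l_i). *)
Record pbc := PBC { terms : list (Z * lit) ; degree : Z }.

Definition tvar (t : Z * lit) : var := fst (snd t).
Definition zsum (l : list Z) : Z := fold_right Z.add 0 l.

(** Semantic (normalized) view of a constraint: using \bar x = 1 - x, the
    constraint is  sum_w vcoef c w * w >= vdeg c  over variables. *)
Definition vcoef (c : pbc) (w : var) : Z :=
  zsum (map (fun t : Z * lit => if Nat.eqb (tvar t) w
                      then (if snd (snd t) then fst t else - fst t) else 0)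
            (terms c)).
Definition vdeg (c : pbc) : Z :=
  degree c - zsum (map (fun t : Z * lit => if snd (snd t) then 0 else fst t) (terms c)).
Definition vars (c : pbc) : list var := nodup Nat.eq_dec (map tvar (terms c)).
(** degree of the normalized literal form (positive coefficients) *)
Definition ndeg (c : pbc) : Z :=
  vdeg c + zsum (map (fun w => Z.max 0 (- vcoef c w)) (vars c)).
Definition lcoef (c : pbc) (l : lit) : Z :=
  if snd l then Z.max 0 (vcoef c (fst l)) else Z.max 0 (- vcoef c (fst l)).
Definition same (c1 c2 : pbc) : Prop :=
  (forall w, vcoef c1 w = vcoef c2 w) /\ vdeg c1 = vdeg c2.

Definition pbneg (c : pbc) : pbc :=
  PBC (map (fun t : Z * lit => (fst t, lneg (snd t))) (terms c))
      (zsum (map fst (terms c)) - degree c + 1).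

Definition from_var (ws : list var) (f : var -> Z) (B : Z) : pbc :=
  PBC (map (fun w => (f w, posl w)) ws) B.
Definition zceil (a b : Z) : Z := - ((- a) / b).
Definition negsum (ws : list var) (f : var -> Z) : Z :=
  zsum (map (fun w => Z.max 0 (- f w)) ws).

Definition lit_axiom (l : lit) : pbc := PBC [(1, l)] 0.
Definition cp_add (c1 c2 : pbc) : pbc :=
  PBC (terms c1 ++ terms c2) (degree c1 + degree c2).
Definition cp_mul (m : Z) (c : pbc) : pbc :=
  PBC (map (fun t : Z * lit => (m * fst t, snd t)) (terms c)) (m * degree c).
Definition cp_div (q : Z) (c : pbc) : pbc :=
  let f := fun w => Z.sgn (vcoef c w) * zceil (Z.abs (vcoef c w)) q in
  from_var (vars c) f (zceil (ndeg c) q - negsum (vars c) f).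
Definition cp_sat (c : pbc) : pbc :=
  let f := fun w => Z.sgn (vcoef c w) * Z.min (Z.abs (vcoef c w)) (Z.max 0 (ndeg c)) in
  from_var (vars c) f (ndeg c - negsum (vars c) f).
Definition cp_weak (c : pbc) (w : var) : pbc :=
  from_var (vars c) (fun w' => if Nat.eqb w' w then 0 else vcoef c w')
           (vdeg c - Z.max 0 (vcoef c w)).

Inductive cpexpr :=
| CPHyp (i : nat)
| CPAx (l : lit)
| CPAdd (e1 e2 : cpexpr)
| CPMul (m : Z) (e : cpexpr)
| CPDiv (q : Z) (e : cpexpr)
| CPSat (e : cpexpr)
| CPWeak (e : cpexpr) (w : var).

Fixpoint cp_eval (db : list pbc) (e : cpexpr) : option pbc :=
  match e with
  | CPHyp i => nth_error db i
  | CPAx l => Some (lit_axiom l)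
  | CPAdd e1 e2 =>
      match cp_eval db e1, cp_eval db e2 with
      | Some c1, Some c2 => Some (cp_add c1 c2)
      | _, _ => None
      end
  | CPMul m e => if 0 <? m then option_map (cp_mul m) (cp_eval db e) else None
  | CPDiv q e => if 0 <? q then option_map (cp_div q) (cp_eval db e) else None
  | CPSat e => option_map cp_sat (cp_eval db e)
  | CPWeak e w => option_map (fun c => cp_weak c w) (cp_eval db e)
  end.

Fixpoint cp_size (e : cpexpr) : nat :=
  match e with
  | CPHyp _ | CPAx _ => 1
  | CPAdd e1 e2 => S (cp_size e1 + cp_size e2)
  | CPMul _ e | CPDiv _ e | CPSat e | CPWeak e _ => S (cp_size e)
  end.

(** partial assignment = list of literals assigned true *)
Definition inb (rho : list lit) (l : lit) : bool :=
  existsb (fun l' => andb (Nat.eqb (fst l') (fst l)) (Bool.eqb (snd l') (snd l))) rho.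
Definition slack (c : pbc) (rho : list lit) : Z :=
  zsum (map (fun w => (if inb rho (w, false) then 0 else lcoef c (w, true))
                      + (if inb rho (w, true) then 0 else lcoef c (w, false)))
            (vars c)) - ndeg c.

(** a sequence of unit propagations on the formula F (most recent first) *)
Inductive up_trail (F : list pbc) : list lit -> Prop :=
| up_nil : up_trail F []
| up_cons rho c l :
    up_trail F rho -> In c F -> ~ In l rho -> ~ In (lneg l) rho ->
    lcoef c l > slack c rho -> up_trail F (l :: rho).

Definition rup (db : list pbc) (r : pbc) (m : nat) : Prop :=
  exists rho, up_trail (pbneg r :: db) rho /\ length rho = m /\
    exists c, In c (pbneg r :: db) /\ slack c rho < 0.

Inductive step :=
| CPStep (e : cpexpr) (r : pbc)
| RUPStep (r : pbc) (m : nat).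

Definition step_result (s : step) : pbc :=
  match s with CPStep _ r => r | RUPStep r _ => r end.
Definition step_props (s : step) : nat :=
  match s with CPStep _ _ => 0%nat | RUPStep _ m => m end.

Definition step_ok (B : nat) (db : list pbc) (s : step) : Prop :=
  match s with
  | CPStep e r => (cp_size e <= B)%nat /\ exists c, cp_eval db e = Some c /\ same c r
  | RUPStep r m => rup db r m
  end.

Fixpoint deriv_ok (B : nat) (db : list pbc) (steps : list step) : Prop :=
  match steps with
  | [] => True
  | s :: ss => step_ok B db s /\ deriv_ok B (db ++ [step_result s]) ss
  end.

Definition is_contradiction (r : pbc) : Prop :=
  (forall w, vcoef r w = 0) /\ vdeg r = 1.

Definition apply_sym (sg : lit -> lit) (c : pbc) : pbc :=
  PBC (map (fun t : Z * lit => (fst t, sg (snd t))) (terms c)) (degree c).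
Definition syn_eq (c1 c2 : pbc) : Prop :=
  Permutation (terms c1) (terms c2) /\ degree c1 = degree c2.
Definition in_support (sg : lit -> lit) (v : var) : Prop := sg (posl v) <> posl v.
Definition is_symmetry (sg : lit -> lit) (F : list pbc) : Prop :=
  (forall l, sg (lneg l) = lneg (sg l)) /\
  (exists tau : lit -> lit, (forall l, tau (sg l) = l) /\ (forall l, sg (tau l) = l)) /\
  (exists supp : list var, forall v, in_support sg v -> In v supp) /\
  (forall c, In c F -> exists c', In c' F /\ syn_eq (apply_sym sg c) c') /\
  (forall c', In c' F -> exists c, In c F /\ syn_eq (apply_sym sg c) c').

Definition occurs (v : var) (F : list pbc) : Prop :=
  exists c, In c F /\ In v (map tvar (terms c)).

Definition lexS (n : nat) (u v : nat -> lit) (a d : nat -> var) : list pbc :=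
  [ PBC [(1, negl (a 1%nat)); (1, u 1%nat); (1, lneg (v 1%nat))] 1 ;
    PBC [(2, posl (a 1%nat)); (1, lneg (u 1%nat)); (1, v 1%nat)] 2 ] ++
  flat_map (fun i =>
    [ PBC [(3, negl (a (S i))); (2, posl (a i)); (1, u (S i)); (1, lneg (v (S i)))] 3 ;
      PBC [(2, posl (a (S i))); (2, negl (a i)); (1, lneg (u (S i))); (1, v (S i))] 2 ])
    (seq 1 (n - 2)) ++
  [ PBC [(1, negl (d 1%nat)); (1, v 1%nat); (1, lneg (u 1%nat))] 1 ;
    PBC [(2, posl (d 1%nat)); (1, lneg (v 1%nat)); (1, u 1%nat)] 2 ] ++
  flat_map (fun i =>
    [ PBC [(4, negl (d (S i))); (3, posl (d i)); (1, negl (a i)); (1, v (S i)); (1, lneg (u (S i)))] 4 ;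
      PBC [(4, posl (d (S i))); (3, negl (d i)); (1, posl (a i)); (1, lneg (v (S i))); (1, u (S i))] 3 ])
    (seq 1 (n - 1)).

(** ---------- Circuit constraints for sigma (p_j = x_{i_j}, q_j = sigma(x_{i_j})) ---------- *)
Definition circuit (k : nat) (p q : nat -> lit) (s t : nat -> var) : list pbc :=
  [ PBC [(1, negl (s 1%nat)); (1, p 1%nat); (1, lneg (q 1%nat))] 1 ;
    PBC [(2, posl (s 1%nat)); (1, lneg (p 1%nat)); (1, q 1%nat)] 2 ] ++
  flat_map (fun j =>
    [ PBC [(3, negl (s (S j))); (2, posl (s j)); (1, p (S j)); (1, lneg (q (S j)))] 3 ;
      PBC [(2, posl (s (S j))); (2, negl (s j)); (1, lneg (p (S j))); (1, q (S j))] 2 ])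
    (seq 1 (k - 2)) ++
  [ PBC [(1, negl (t 1%nat)); (1, q 1%nat); (1, lneg (p 1%nat))] 1 ;
    PBC [(2, posl (t 1%nat)); (1, lneg (q 1%nat)); (1, p 1%nat)] 2 ] ++
  flat_map (fun j =>
    [ PBC [(4, negl (t (S j))); (3, posl (t j)); (1, negl (s j)); (1, q (S j)); (1, lneg (p (S j)))] 4 ;
      PBC [(3, posl (t (S j))); (3, negl (t j)); (1, posl (s j)); (1, lneg (q (S j))); (1, p (S j))] 3 ])
    (seq 1 (k - 1)).

(* Main.v *)
Require Import Defs.
From Stdlib Require Import ZArith List Permutation Lia Bool.
Import ListNotations.
Open Scope Z_scope.


Definition b2 (b : bool) : Z := if b then 1 else 0.
Definition val (al : var -> bool) (l : lit) : Z :=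
  if snd l then b2 (al (fst l)) else 1 - b2 (al (fst l)).
Definition sat (c : pbc) al :=
  degree c <= zsum (map (fun t : Z * lit => fst t * val al (snd t)) (terms c)).
Definition agrees al (rho : list lit) := forall l, In l rho -> val al l = 1.
Definition consistent (rho : list lit) :=
  forall v, In (v, true) rho -> In (v, false) rho -> False.

Lemma val_lneg al l : val al (lneg l) = 1 - val al l.
Proof. destruct l as [v b]; destruct b; unfold val, lneg, b2; simpl; destruct (al v); reflexivity. Qed.
Lemma val_negl al v : val al (negl v) = 1 - val al (posl v).
Proof. unfold val; simpl; lia. Qed.
Lemma val_bound al l : 0 <= val al l <= 1.
Proof. destruct l as [v b]; unfold val, b2; simpl; destruct b; destruct (al v); simpl; lia. Qed.

Lemma zsum_map_add {T} (f g : T -> Z) L :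
  zsum (map (fun x => f x + g x) L) = zsum (map f L) + zsum (map g L).
Proof. induction L; simpl; lia. Qed.
Lemma zsum_map_sub {T} (f g : T -> Z) L :
  zsum (map (fun x => f x - g x) L) = zsum (map f L) - zsum (map g L).
Proof. induction L; simpl; lia. Qed.
Lemma zsum_map_ext {T} (f g : T -> Z) L :
  (forall x, In x L -> f x = g x) -> zsum (map f L) = zsum (map g L).
Proof. induction L; simpl; intros H; auto. rewrite H, IHL; auto. Qed.
Lemma zsum_map_mulr {T} (f : T -> Z) L y :
  zsum (map f L) * y = zsum (map (fun x => f x * y) L).
Proof. induction L; simpl; lia. Qed.

Lemma single_notin (W : list var) v (x : Z) : ~ In v W ->
  zsum (map (fun w => if Nat.eqb v w then x else 0) W) = 0.
Proof.
  induction W; simpl; auto. intros H.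
  destruct (Nat.eqb_spec v a); [exfalso; auto|]. rewrite IHW; auto.
Qed.
Lemma single_in (W : list var) v (x : Z) : NoDup W -> In v W ->
  zsum (map (fun w => if Nat.eqb v w then x else 0) W) = x.
Proof.
  induction W; simpl; [tauto|]. intros Hn H. inversion Hn; subst.
  destruct (Nat.eqb_spec v a).
  - subst. rewrite single_notin; auto; lia.
  - destruct H; [congruence|]. rewrite IHW; auto.
Qed.

Lemma exchange {T} (L : list T) (f : T -> var) (g : T -> Z) (W : list var) :
  NoDup W -> (forall t, In t L -> In (f t) W) ->
  zsum (map (fun w => zsum (map (fun t => if Nat.eqb (f t) w then g t else 0) L)) W)
  = zsum (map g L).
Proof.
  intros Hn. induction L; simpl; intros H.
  - clear H. induction W; simpl; auto. inversion Hn; subst. rewrite IHW; auto.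
  - rewrite zsum_map_add. rewrite IHL by auto. rewrite single_in; auto.
Qed.

Definition sgn_t (t : Z * lit) : Z := if snd (snd t) then fst t else - fst t.
Definition neg_t (t : Z * lit) : Z := if snd (snd t) then 0 else fst t.

Lemma vars_nodup c : NoDup (vars c).
Proof. apply NoDup_nodup. Qed.
Lemma vars_in c t : In t (terms c) -> In (tvar t) (vars c).
Proof. intros H. unfold vars. apply nodup_In. apply in_map; auto. Qed.

Lemma raw_norm c al :
  zsum (map (fun t : Z * lit => fst t * val al (snd t)) (terms c)) - degree c
  = zsum (map (fun w => vcoef c w * b2 (al w)) (vars c)) - vdeg c.
Proof.
  assert (E1 : zsum (map (fun t : Z * lit => fst t * val al (snd t)) (terms c))
     = zsum (map (fun t => sgn_t t * b2 (al (tvar t))) (terms c)) + zsum (map neg_t (terms c))).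
  { rewrite <- zsum_map_add. apply zsum_map_ext. intros [z [v b]] _.
    unfold sgn_t, neg_t, val, tvar; cbn [fst snd]. destruct b; cbn [fst snd]; ring. }
  assert (E2 : zsum (map (fun w => vcoef c w * b2 (al w)) (vars c))
     = zsum (map (fun t => sgn_t t * b2 (al (tvar t))) (terms c))).
  { rewrite <- (exchange (terms c) tvar (fun t => sgn_t t * b2 (al (tvar t))) (vars c)).
    2: apply vars_nodup. 2: apply vars_in.
    apply zsum_map_ext. intros w _. unfold vcoef. rewrite zsum_map_mulr.
    apply zsum_map_ext. intros t _.
    destruct (Nat.eqb_spec (tvar t) w); [subst|lia]. unfold sgn_t. reflexivity. }
  unfold vdeg. rewrite E1, E2. unfold neg_t. lia.
Qed.

Lemma inb_In rho l : inb rho l = true <-> In l rho.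
Proof.
  unfold inb. rewrite existsb_exists. split.
  - intros [[v b] [H1 H2]]. destruct l as [v' b']. simpl in H2.
    apply andb_true_iff in H2 as [H2 H3]. apply Nat.eqb_eq in H2.
    apply eqb_prop in H3. subst; auto.
  - intros H. exists l. split; auto. destruct l; simpl. rewrite Nat.eqb_refl, eqb_reflx; auto.
Qed.
Lemma inb_false rho l : inb rho l = false <-> ~ In l rho.
Proof. rewrite <- inb_In. destruct (inb rho l); intuition congruence. Qed.

Definition ext (rho : list lit) (c : pbc) (w : var) : bool :=
  if inb rho (w, true) then true else if inb rho (w, false) then false else (0 <? vcoef c w).

Lemma slack_ext c rho : consistent rho ->
  slack c rho = zsum (map (fun w => vcoef c w * b2 (ext rho c w)) (vars c)) - vdeg c.
Proof.
  intros Hc. unfold slack, ndeg.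
  enough (zsum (map (fun w => (if inb rho (w, false) then 0 else lcoef c (w, true)) +
            (if inb rho (w, true) then 0 else lcoef c (w, false))) (vars c))
          - zsum (map (fun w => Z.max 0 (- vcoef c w)) (vars c))
          = zsum (map (fun w => vcoef c w * b2 (ext rho c w)) (vars c))) by lia.
  rewrite <- zsum_map_sub. apply zsum_map_ext. intros w _.
  unfold lcoef, ext; simpl.
  destruct (inb rho (w, true)) eqn:E1; destruct (inb rho (w, false)) eqn:E2.
  - exfalso. apply (Hc w); apply inb_In; auto.
  - simpl; lia.
  - simpl; lia.
  - destruct (Z.ltb_spec 0 (vcoef c w)); simpl; lia.
Qed.

Lemma ext_agrees c rho : consistent rho -> agrees (ext rho c) rho.
Proof.
  intros Hc [v b] H. unfold val, ext; simpl. destruct b.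
  - rewrite (proj2 (inb_In _ _) H). reflexivity.
  - assert (inb rho (v, true) = false).
    { apply inb_false. intros H'. apply (Hc v); auto. }
    rewrite H0, (proj2 (inb_In _ _) H). reflexivity.
Qed.

Lemma lemA c rho : consistent rho -> (forall al, agrees al rho -> ~ sat c al) -> slack c rho < 0.
Proof.
  intros Hc H. destruct (Z_lt_ge_dec (slack c rho) 0); auto. exfalso.
  apply (H (ext rho c)). apply ext_agrees; auto.
  unfold sat. pose proof (raw_norm c (ext rho c)). rewrite slack_ext in g; auto. lia.
Qed.

Lemma vcoef_notin c v : ~ In v (vars c) -> vcoef c v = 0.
Proof.
  intros H. unfold vcoef. transitivity (zsum (map (fun _ : Z * lit => 0) (terms c))).
  - apply zsum_map_ext. intros t Ht. destruct (Nat.eqb_spec (tvar t) v); auto.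
    subst. exfalso. apply H. apply vars_in; auto.
  - induction (terms c); simpl; auto.
Qed.

Lemma inb_cons l' rho l : inb (l' :: rho) l = ((Nat.eqb (fst l') (fst l)) && eqb (snd l') (snd l)) || inb rho l.
Proof. reflexivity. Qed.

Lemma slack_cons c rho l : ~ In l rho -> ~ In (lneg l) rho ->
  slack c (lneg l :: rho) = slack c rho - lcoef c l.
Proof.
  intros H1 H2. destruct l as [v b0]. unfold slack.
  assert (E : forall w, ((if inb (lneg (v, b0) :: rho) (w, false) then 0 else lcoef c (w, true)) +
     (if inb (lneg (v, b0) :: rho) (w, true) then 0 else lcoef c (w, false)))
     = ((if inb rho (w, false) then 0 else lcoef c (w, true)) +
     (if inb rho (w, true) then 0 else lcoef c (w, false))) - (if Nat.eqb v w then lcoef c (v, b0) else 0)).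
  { intros w. rewrite !inb_cons. cbn [lneg fst snd].
    destruct (Nat.eqb_spec v w).
    - subst. idtac.
      assert (inb rho (w, b0) = false) by (apply inb_false; auto).
      assert (inb rho (w, negb b0) = false) by (apply inb_false; auto).
      destruct b0; cbn [negb andb orb eqb] in *; rewrite ?H, ?H0; unfold lcoef; cbn [fst snd]; lia.
    - cbn [andb orb]. lia. }
  rewrite (zsum_map_ext _ _ _ (fun w _ => E w)). rewrite zsum_map_sub.
  destruct (in_dec Nat.eq_dec v (vars c)).
  - rewrite single_in; auto. 2: apply vars_nodup. lia.
  - rewrite single_notin; auto. unfold lcoef. simpl. rewrite vcoef_notin; auto.
    destruct b0; simpl; lia.
Qed.

Lemma consistent_cons rho l : consistent rho -> ~ In (lneg l) rho -> consistent (l :: rho).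
Proof.
  intros Hc Hn v H1 H2. destruct l as [w b]. simpl in *.
  destruct H1 as [H1|H1]; destruct H2 as [H2|H2]; try congruence.
  - inversion H1; subst. apply Hn; auto.
  - inversion H2; subst. apply Hn; auto.
  - eapply Hc; eauto.
Qed.

Lemma lemB c rho l : consistent rho -> ~ In l rho -> ~ In (lneg l) rho ->
  (forall al, agrees al rho -> val al l = 0 -> ~ sat c al) -> slack c rho < lcoef c l.
Proof.
  intros Hc H1 H2 H.
  assert (slack c (lneg l :: rho) < 0).
  { apply lemA.
    - apply consistent_cons; auto. destruct l as [v b]; unfold lneg; simpl; rewrite negb_involutive; auto.
    - intros al Ha. apply H.
      + intros l' Hl'. apply Ha; simpl; auto.
      + pose proof (Ha (lneg l) (or_introl eq_refl)). rewrite val_lneg in H0. lia. }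
  rewrite slack_cons in H0; auto. lia.
Qed.

Lemma trail_consistent F rho : up_trail F rho -> consistent rho.
Proof.
  induction 1. { intros v H; inversion H. }
  apply consistent_cons; auto.
Qed.

Definition lit_eq_dec : forall x y : lit, {x = y} + {x <> y}.
Proof. decide equality; [apply bool_dec | apply Nat.eq_dec]. Defined.

Definition G (F : list pbc) (rho : list lit) (m : nat) : Prop :=
  forall rho0, up_trail F rho0 -> incl rho rho0 ->
  exists rho', up_trail F (rho' ++ rho0) /\ (length rho' <= m)%nat /\
    exists c, In c F /\ slack c (rho' ++ rho0) < 0.

Lemma G_mono F rho m rho2 m2 : G F rho m -> incl rho rho2 -> (m <= m2)%nat -> G F rho2 m2.
Proof.
  intros H Hi Hm rho0 Ht Hi2. destruct (H rho0 Ht) as [r [H1 [H2 H3]]].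
  - eapply incl_tran; eauto.
  - exists r; repeat split; auto. lia.
Qed.

Lemma agrees_incl al r1 r2 : incl r1 r2 -> agrees al r2 -> agrees al r1.
Proof. intros H H2 l Hl; auto. Qed.

Lemma G_conflict F rho m c : In c F -> (forall al, agrees al rho -> ~ sat c al) -> G F rho m.
Proof.
  intros Hc H rho0 Ht Hi. exists []. simpl. repeat split; auto. lia.
  exists c; split; auto. apply lemA. eapply trail_consistent; eauto.
  intros al Ha. apply H. eapply agrees_incl; eauto.
Qed.

Lemma G_prop F rho m c l : In c F ->
  (forall al, agrees al rho -> val al l = 0 -> ~ sat c al) ->
  G F (l :: rho) m -> G F rho (S m).
Proof.
  intros Hc H HG rho0 Ht Hi.
  destruct (in_dec lit_eq_dec l rho0) as [Hl|Hl].
  - destruct (HG rho0 Ht) as [r [H1 [H2 H3]]].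
    + intros x [<-|Hx]; auto.
    + exists r; repeat split; auto.
  - destruct (in_dec lit_eq_dec (lneg l) rho0) as [Hn|Hn].
    + exists []. simpl. repeat split; auto. lia. exists c; split; auto.
      apply lemA. eapply trail_consistent; eauto.
      intros al Ha. apply H. eapply agrees_incl; eauto.
      pose proof (Ha _ Hn). rewrite val_lneg in H0. lia.
    + assert (Ht' : up_trail F (l :: rho0)).
      { econstructor; eauto. apply Z.lt_gt. apply lemB; auto. eapply trail_consistent; eauto.
        intros al Ha. apply H. eapply agrees_incl; eauto. }
      destruct (HG (l :: rho0) Ht') as [r [H1 [H2 H3]]].
      * intros x [<-|Hx]; simpl; auto.
      * exists (r ++ [l]). rewrite <- app_assoc. simpl. repeat split; auto.
        rewrite length_app; simpl; lia.
Qed.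

Lemma rup_of_G db r m : G (pbneg r :: db) [] m -> exists m', (m' <= m)%nat /\ rup db r m'.
Proof.
  intros H. destruct (H [] (up_nil _) (incl_nil_l _)) as [r' [H1 [H2 [c [H3 H4]]]]].
  rewrite app_nil_r in *. exists (length r'). split; auto.
  exists r'. repeat split; auto. exists c; auto.
Qed.

Lemma deriv_app B db ss1 ss2 :
  deriv_ok B db (ss1 ++ ss2) <-> deriv_ok B db ss1 /\ deriv_ok B (db ++ map step_result ss1) ss2.
Proof.
  revert db. induction ss1; intros db; simpl.
  - rewrite app_nil_r. tauto.
  - rewrite IHss1. rewrite <- app_assoc. simpl. tauto.
Qed.

Lemma agrees_cons_inv al l rho : agrees al (l :: rho) -> val al l = 1 /\ agrees al rho.
Proof. intros H. split; [apply H; simpl; auto| intros x Hx; apply H; simpl; auto]. Qed.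
Lemma val_false al x : val al (x, false) = 1 - val al (x, true).
Proof. reflexivity. Qed.

Lemma incl_cons_inv {A} (x : A) l l' : incl (x :: l) l' -> incl l l'.
Proof. intros H y Hy; apply H; simpl; auto. Qed.

Ltac add_bounds :=
  repeat match goal with
  | |- context [val ?al ?x] =>
      lazymatch goal with H : 0 <= val al x <= 1 |- _ => fail | _ => pose proof (val_bound al x) end
  | H : context [val ?al ?x] |- _ =>
      lazymatch goal with H : 0 <= val al x <= 1 |- _ => fail | _ => pose proof (val_bound al x) end
  end.

Ltac chk :=
  let al := fresh "al" in let Ha := fresh "Ha" in
  intros al Ha; try (let Hl := fresh "Hl" in intros Hl);
  repeat match goal with
         | H : agrees al (_ :: _) |- _ => apply agrees_cons_inv in H; destruct H
         | H : incl ?r ?r', H2 : agrees al ?r' |- _ =>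
             let e := fresh "Hag" in pose proof (agrees_incl al r r' H H2) as e; clear H
         | H : In ?l ?r, H2 : agrees al ?r |- _ =>
             let e := fresh "e" in pose proof (H2 l H) as e; clear H
         end;
  unfold sat in *; cbn [terms degree map zsum fold_right fst snd] in *;
  repeat rewrite val_lneg in *; unfold negl, posl in *; repeat rewrite val_false in *;
  add_bounds; lia.

Record Par := mkPar { pn : nat; pxs : nat -> var; psg : lit -> lit; pk : nat; pidx : nat -> nat;
  pC : list pbc; pD : list pbc; pa : nat -> var; pd : nat -> var; ps : nat -> var; pt : nat -> var }.

Definition uu P i := psg P (posl (pxs P i)).
Definition vv P i := posl (pxs P i).
Definition pp P j := posl (pxs P (pidx P j)).
Definition qq P j := psg P (posl (pxs P (pidx P j))).

Definition db0 P := pC P ++ pD P ++ [pbneg (PBC [(1, posl (pt P (pk P)))] 1)] ++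
  lexS (pn P) (fun i => psg P (posl (pxs P i))) (fun i => posl (pxs P i)) (pa P) (pd P) ++
  [pbneg (PBC [(1, posl (pd P (pn P)))] 1)].

Record WF P : Prop := {
  w_n : (1 <= pn P)%nat; w_k : (1 <= pk P)%nat;
  w_i1 : (1 <= pidx P 1)%nat; w_ik : (pidx P (pk P) <= pn P)%nat;
  w_mono : forall j, (1 <= j)%nat -> (j < pk P)%nat -> (pidx P j < pidx P (S j))%nat;
  w_nodup : NoDup (map (pxs P) (seq 1 (pn P)));
  w_supp : forall v, in_support (psg P) v <-> exists j, (1 <= j <= pk P)%nat /\ v = pxs P (pidx P j);
  w_circ : incl (circuit (pk P) (fun j => posl (pxs P (pidx P j)))
                   (fun j => psg P (posl (pxs P (pidx P j)))) (ps P) (pt P)) (pD P) }.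

Lemma mono_le P (W : WF P) j j' : (1 <= j)%nat -> (j <= j')%nat -> (j' <= pk P)%nat ->
  (pidx P j + (j' - j) <= pidx P j')%nat.
Proof.
  intros H1 H2 H3. induction j' as [|j' IH]; [lia|].
  destruct (Nat.eq_dec j (S j')). { subst. lia. }
  assert (pidx P j' < pidx P (S j'))%nat by (apply (w_mono P W); lia).
  specialize (IH ltac:(lia) ltac:(lia)). lia.
Qed.

Lemma idx_le_n P (W : WF P) j : (1 <= j <= pk P)%nat -> (j <= pidx P j <= pidx P (pk P) - (pk P - j))%nat.
Proof.
  intros H. pose proof (mono_le P W j (pk P) ltac:(lia) ltac:(lia) ltac:(lia)).
  pose proof (mono_le P W 1 j ltac:(lia) ltac:(lia) ltac:(lia)). pose proof (w_i1 P W). lia.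
Qed.

Lemma nodup_map_inj {A B} (f : A -> B) l x y : NoDup (map f l) -> In x l -> In y l -> f x = f y -> x = y.
Proof.
  induction l; simpl; [tauto|]. intros Hn Hx Hy E. inversion Hn; subst.
  destruct Hx as [<-|Hx]; destruct Hy as [<-|Hy]; auto.
  - exfalso. apply H1. rewrite E. apply in_map; auto.
  - exfalso. apply H1. rewrite <- E. apply in_map; auto.
Qed.

Lemma w_sup P (W : WF P) i : (1 <= i <= pn P)%nat -> (forall j, (1 <= j <= pk P)%nat -> i <> pidx P j) ->
          psg P (posl (pxs P i)) = posl (pxs P i).
Proof.
  intros H1 H2. destruct (lit_eq_dec (psg P (posl (pxs P i))) (posl (pxs P i))) as [e|ne]; auto.
  exfalso. destruct (proj1 (w_supp P W (pxs P i)) ne) as [j [Hj E]].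
  pose proof (idx_le_n P W j Hj). pose proof (w_ik P W).
  apply (H2 j Hj). apply (nodup_map_inj (pxs P) (seq 1 (pn P))); [apply (w_nodup P W) | apply in_seq; lia | apply in_seq; lia | auto].
Qed.

Lemma ns_between P (W : WF P) j i : (1 <= j)%nat -> (j < pk P)%nat ->
  (pidx P j < i < pidx P (S j))%nat -> uu P i = vv P i.
Proof.
  intros H1 H2 H3. unfold uu, vv. apply (w_sup P W).
  - pose proof (idx_le_n P W (S j) ltac:(lia)). pose proof (w_ik P W). lia.
  - intros l Hl E. subst i. destruct (Nat.le_gt_cases l j).
    + pose proof (mono_le P W l j ltac:(lia) ltac:(lia) ltac:(lia)). lia.
    + pose proof (mono_le P W (S j) l ltac:(lia) ltac:(lia) ltac:(lia)). lia.
Qed.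

Lemma ns_before P (W : WF P) i : (1 <= i)%nat -> (i < pidx P 1)%nat -> uu P i = vv P i.
Proof.
  intros H1 H2. unfold uu, vv. apply (w_sup P W).
  - pose proof (idx_le_n P W 1 ltac:(pose proof (w_k P W); lia)). pose proof (w_ik P W). lia.
  - intros l Hl E. subst i. pose proof (mono_le P W 1 l ltac:(lia) ltac:(lia) ltac:(lia)). lia.
Qed.

Lemma ns_after P (W : WF P) i : (pidx P (pk P) < i)%nat -> (i <= pn P)%nat -> uu P i = vv P i.
Proof.
  intros H1 H2. unfold uu, vv. apply (w_sup P W).
  - pose proof (idx_le_n P W 1 ltac:(pose proof (w_k P W); lia)). lia.
  - intros l Hl E. subst i. pose proof (mono_le P W l (pk P) ltac:(lia) ltac:(lia) ltac:(lia)). lia.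
Qed.

Ltac in_lex := unfold db0; apply in_or_app; right; apply in_or_app; right;
  apply in_or_app; right; apply in_or_app; left; unfold lexS.

Lemma mem_a1 P : In (PBC [(1, negl (pa P 1)); (1, uu P 1); (1, lneg (vv P 1))] 1) (db0 P).
Proof. in_lex. simpl; auto. Qed.
Lemma mem_d1 P : In (PBC [(2, posl (pd P 1)); (1, lneg (vv P 1)); (1, uu P 1)] 2) (db0 P).
Proof. in_lex. apply in_or_app; right. apply in_or_app; right. simpl; auto. Qed.
Lemma mem_aS P j : (2 <= j)%nat -> (j <= pn P - 1)%nat ->
  In (PBC [(3, negl (pa P j)); (2, posl (pa P (j - 1))); (1, uu P j); (1, lneg (vv P j))] 3) (db0 P).
Proof.
  intros H1 H2. in_lex. apply in_or_app; right. apply in_or_app; left.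
  apply in_flat_map. exists (j - 1)%nat. split; [apply in_seq; lia|].
  replace (S (j - 1)) with j by lia. simpl; auto.
Qed.
Lemma mem_dS P j : (2 <= j)%nat -> (j <= pn P)%nat ->
  In (PBC [(4, posl (pd P j)); (3, negl (pd P (j - 1))); (1, posl (pa P (j - 1))); (1, lneg (vv P j)); (1, uu P j)] 3) (db0 P).
Proof.
  intros H1 H2. in_lex. apply in_or_app; right. apply in_or_app; right. apply in_or_app; right.
  apply in_flat_map. exists (j - 1)%nat. split; [apply in_seq; lia|].
  replace (S (j - 1)) with j by lia. simpl; auto.
Qed.
Lemma mem_tk P : In (PBC [(1, negl (pt P (pk P)))] 1) (db0 P).
Proof. unfold db0. apply in_or_app; right. apply in_or_app; right. simpl; auto. Qed.
Lemma mem_dn P : In (PBC [(1, negl (pd P (pn P)))] 1) (db0 P).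
Proof. unfold db0. do 4 (apply in_or_app; right). left; reflexivity. Qed.

Ltac in_circ W := unfold db0; apply in_or_app; right; apply in_or_app; left;
  apply (w_circ _ W); unfold circuit.

Lemma mem_s1 P (W : WF P) : In (PBC [(1, negl (ps P 1)); (1, pp P 1); (1, lneg (qq P 1))] 1) (db0 P).
Proof. in_circ W. simpl; auto. Qed.
Lemma mem_t1 P (W : WF P) : In (PBC [(2, posl (pt P 1)); (1, lneg (qq P 1)); (1, pp P 1)] 2) (db0 P).
Proof. in_circ W. apply in_or_app; right. apply in_or_app; right. simpl; auto. Qed.
Lemma mem_sS P (W : WF P) j : (2 <= j)%nat -> (j <= pk P - 1)%nat ->
  In (PBC [(3, negl (ps P j)); (2, posl (ps P (j - 1))); (1, pp P j); (1, lneg (qq P j))] 3) (db0 P).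
Proof.
  intros H1 H2. in_circ W. apply in_or_app; right. apply in_or_app; left.
  apply in_flat_map. exists (j - 1)%nat. split; [apply in_seq; lia|].
  replace (S (j - 1)) with j by lia. simpl; auto.
Qed.
Lemma mem_tS P (W : WF P) j : (2 <= j)%nat -> (j <= pk P)%nat ->
  In (PBC [(3, posl (pt P j)); (3, negl (pt P (j - 1))); (1, posl (ps P (j - 1))); (1, lneg (qq P j)); (1, pp P j)] 3) (db0 P).
Proof.
  intros H1 H2. in_circ W. apply in_or_app; right. apply in_or_app; right. apply in_or_app; right.
  apply in_flat_map. exists (j - 1)%nat. split; [apply in_seq; lia|].
  replace (S (j - 1)) with j by lia. simpl; auto.
Qed.

Ltac chk2 := unfold uu, vv, pp, qq in *; chk.



Lemma chain_d P (W : WF P) F m lo hi : incl (db0 P) F -> (1 <= lo)%nat -> (lo <= hi)%nat -> (hi <= pn P)%nat ->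
  (forall i, (lo < i <= hi)%nat -> uu P i = vv P i) ->
  forall rho, In (posl (pd P lo)) rho ->
  (forall rho', incl rho rho' -> In (posl (pd P hi)) rho' -> G F rho' m) ->
  G F rho (m + (hi - lo)).
Proof.
  intros Hincl H1 H2 H3 Hu. remember (hi - lo)%nat as len. revert lo H1 H2 Hu Heqlen.
  induction len; intros lo H1 H2 Hu Heqlen rho Hr Hc.
  - rewrite Nat.add_0_r. assert (lo = hi) by lia. subst. apply Hc; auto. apply incl_refl.
  - rewrite Nat.add_succ_r. pose proof (mem_dS P (S lo) ltac:(lia) ltac:(lia)) as Hm.
    replace (S lo - 1)%nat with lo in Hm by lia. rewrite (Hu (S lo)) in Hm by lia.
    eapply (G_prop _ _ _ _ (posl (pd P (S lo)))); [apply Hincl, Hm | chk2 |].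
    apply (IHlen (S lo)); try lia; auto.
    + intros i Hi; apply Hu; lia.
    + simpl; auto.
    + intros rho' Hi Hi'. apply Hc; auto. eapply incl_cons_inv; eauto.
Qed.

Lemma chain_a P (W : WF P) F m lo hi : incl (db0 P) F -> (1 <= lo)%nat -> (lo <= hi)%nat -> (hi <= pn P - 1)%nat ->
  (forall i, (lo < i <= hi)%nat -> uu P i = vv P i) ->
  forall rho, In (posl (pa P hi)) rho ->
  (forall rho', incl rho rho' -> In (posl (pa P lo)) rho' -> G F rho' m) ->
  G F rho (m + (hi - lo)).
Proof.
  intros Hincl H1 H2 H3 Hu. remember (hi - lo)%nat as len. revert hi H2 H3 Hu Heqlen.
  induction len; intros hi H2 H3 Hu Heqlen rho Hr Hc.
  - rewrite Nat.add_0_r. assert (lo = hi) by lia. subst. apply Hc; auto. apply incl_refl.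
  - rewrite Nat.add_succ_r. pose proof (mem_aS P hi ltac:(lia) ltac:(lia)) as Hm.
    rewrite (Hu hi) in Hm by lia.
    eapply (G_prop _ _ _ _ (posl (pa P (hi - 1)))); [apply Hincl, Hm | chk2 |].
    apply (IHlen (hi - 1)%nat); try lia; auto.
    + intros i Hi; apply Hu; lia.
    + simpl; auto.
    + intros rho' Hi Hi'. apply Hc; auto. eapply incl_cons_inv; eauto.
Qed.

Definition cl_dt P j := PBC [(1, posl (pd P (pidx P j))); (1, posl (pt P j))] 1.
Definition cl_sd P j := PBC [(1, negl (ps P j)); (1, posl (pd P (pidx P j)))] 1.
Definition cl_at P j := PBC [(1, negl (pa P (pidx P j))); (1, posl (pt P j))] 1.
Definition cl_h P j := PBC [(1, posl (pd P (pidx P (S j)))); (1, posl (pt P (S j))); (1, negl (pt P j))] 1.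

Ltac chk3 := unfold pbneg, cl_dt, cl_sd, cl_at, cl_h in *; chk2.

Lemma d_start P (W : WF P) F m rho : incl (db0 P) F -> (1 < pidx P 1)%nat ->
  (forall rho', incl rho rho' -> In (posl (pd P (pidx P 1 - 1))) rho' -> G F rho' m) ->
  G F rho (S (m + (pidx P 1 - 1 - 1))).
Proof.
  intros Hincl H1 Hc. pose proof (mem_d1 P) as Hm. rewrite (ns_before P W 1) in Hm by lia.
  eapply (G_prop _ _ _ _ (posl (pd P 1))); [apply Hincl, Hm | chk2 |].
  apply (chain_d P W); auto; try lia.
  - pose proof (idx_le_n P W 1 ltac:(pose proof (w_k P W); lia)). pose proof (w_ik P W). lia.
  - intros i Hi. apply (ns_before P W); lia.
  - simpl; auto.
  - intros rho' Hi Hi'. apply Hc; auto. eapply incl_cons_inv; eauto.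
Qed.

Ltac gm e := eapply (G_mono _ _ e); [ | apply incl_refl | try lia].

Lemma idx1_bound P (W : WF P) : (1 <= pidx P 1 <= pn P)%nat.
Proof. pose proof (idx_le_n P W 1 ltac:(pose proof (w_k P W); lia)). pose proof (w_ik P W). pose proof (w_i1 P W). lia. Qed.

Lemma rup_dt1 P (W : WF P) db : incl (db0 P) db ->
  G (pbneg (cl_dt P 1) :: db) [] (pidx P 1 + 4).
Proof.
  intros Hdb. assert (Hincl : incl (db0 P) (pbneg (cl_dt P 1) :: db)) by (apply incl_tl; auto).
  pose proof (idx1_bound P W).
  gm (3 + (pidx P 1 + 1))%nat.
  eapply (G_prop _ _ _ _ (negl (pd P (pidx P 1)))); [left; reflexivity | chk3 |].
  eapply (G_prop _ _ _ _ (negl (pt P 1))); [left; reflexivity | chk3 |].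
  eapply (G_prop _ _ _ _ (pp P 1)); [apply Hincl, (mem_t1 P W) | chk3 |].
  destruct (Nat.eq_dec (pidx P 1) 1) as [E|E].
  + apply (G_conflict _ _ _ _ (Hincl _ (mem_d1 P))). unfold pp, qq in *. rewrite E in *. chk2.
  + gm (S (0 + (pidx P 1 - 1 - 1))). apply (d_start P W); auto; [lia|].
    intros rho' Hi Hi'. apply (G_conflict _ _ _ _ (Hincl _ (mem_dS P (pidx P 1) ltac:(lia) ltac:(lia)))).
    chk3.
Qed.

Lemma rup_sd1 P (W : WF P) db : incl (db0 P) db ->
  G (pbneg (cl_sd P 1) :: db) [] (pidx P 1 + 4).
Proof.
  intros Hdb. assert (Hincl : incl (db0 P) (pbneg (cl_sd P 1) :: db)) by (apply incl_tl; auto).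
  pose proof (idx1_bound P W).
  gm (2 + (pidx P 1 + 2))%nat.
  eapply (G_prop _ _ _ _ (posl (ps P 1))); [left; reflexivity | chk3 |].
  eapply (G_prop _ _ _ _ (negl (pd P (pidx P 1)))); [left; reflexivity | chk3 |].
  pose proof (Hincl _ (mem_d1 P)) as Hd1. pose proof (Hincl _ (mem_s1 P W)) as Hs1.
  destruct (Nat.eq_dec (pidx P 1) 1) as [E|E].
  + unfold pp, qq, uu, vv in *. rewrite E in *.
    eapply (G_prop _ _ _ _ (lneg (posl (pxs P 1)))); [apply Hd1 | chk3 |].
    eapply (G_prop _ _ _ _ (psg P (posl (pxs P 1)))); [apply Hd1 | chk3 |].
    apply (G_conflict _ _ _ _ Hs1). chk3.
  + gm (S (2 + (pidx P 1 - 1 - 1))). apply (d_start P W); auto; [lia|].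
    intros rho' Hi Hi'. pose proof (Hincl _ (mem_dS P (pidx P 1) ltac:(lia) ltac:(lia))) as Hd.
    eapply (G_prop _ _ _ _ (lneg (pp P 1))); [apply Hd | chk3 |].
    eapply (G_prop _ _ _ _ (qq P 1)); [apply Hd | chk3 |].
    apply (G_conflict _ _ _ _ Hs1). chk3.
Qed.

Lemma rup_at1 P (W : WF P) db : incl (db0 P) db -> (1 < pk P)%nat ->
  G (pbneg (cl_at P 1) :: db) [] (pidx P 1 + 4).
Proof.
  intros Hdb Hk. assert (Hincl : incl (db0 P) (pbneg (cl_at P 1) :: db)) by (apply incl_tl; auto).
  pose proof (idx1_bound P W).
  pose proof (w_mono P W 1 ltac:(lia) Hk). pose proof (idx_le_n P W 2 ltac:(lia)). pose proof (w_ik P W).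
  gm 4%nat.
  eapply (G_prop _ _ _ _ (posl (pa P (pidx P 1)))); [left; reflexivity | chk3 |].
  eapply (G_prop _ _ _ _ (negl (pt P 1))); [left; reflexivity | chk3 |].
  pose proof (Hincl _ (mem_t1 P W)) as Ht1.
  eapply (G_prop _ _ _ _ (pp P 1)); [apply Ht1 | chk3 |].
  eapply (G_prop _ _ _ _ (lneg (qq P 1))); [apply Ht1 | chk3 |].
  destruct (Nat.eq_dec (pidx P 1) 1) as [E|E].
  + pose proof (Hincl _ (mem_a1 P)) as Ha1. unfold pp, qq, uu, vv in *. rewrite E in *.
    apply (G_conflict _ _ _ _ Ha1). chk3.
  + pose proof (Hincl _ (mem_aS P (pidx P 1) ltac:(lia) ltac:(lia))) as Ha.
    apply (G_conflict _ _ _ _ Ha). chk3.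
Qed.

Lemma seg P (W : WF P) j : (1 <= j)%nat -> (j < pk P)%nat ->
  (1 <= pidx P j)%nat /\ (pidx P j < pidx P (S j))%nat /\ (pidx P (S j) <= pn P)%nat.
Proof.
  intros H1 H2. pose proof (w_mono P W j H1 H2). pose proof (idx_le_n P W j ltac:(lia)).
  pose proof (idx_le_n P W (S j) ltac:(lia)). pose proof (w_ik P W). lia.
Qed.

Lemma rup_h P (W : WF P) db j : incl (db0 P) db -> (1 <= j)%nat -> (j < pk P)%nat ->
  In (cl_sd P j) db ->
  G (pbneg (cl_h P j) :: db) [] (2 * (pidx P (S j) - pidx P j) + 8).
Proof.
  intros Hdb Hj1 Hj2 Hsd. assert (Hincl : incl (db0 P) (pbneg (cl_h P j) :: db)) by (apply incl_tl; auto).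
  pose proof (seg P W j Hj1 Hj2).
  gm (6 + (0 + (pidx P (S j) - 1 - pidx P j)))%nat.
  eapply (G_prop _ _ _ _ (negl (pd P (pidx P (S j))))); [left; reflexivity | chk3 |].
  eapply (G_prop _ _ _ _ (negl (pt P (S j)))); [left; reflexivity | chk3 |].
  eapply (G_prop _ _ _ _ (posl (pt P j))); [left; reflexivity | chk3 |].
  pose proof (Hincl _ (mem_tS P W (S j) ltac:(lia) ltac:(lia))) as Ht.
  replace (S j - 1)%nat with j in Ht by lia.
  eapply (G_prop _ _ _ _ (posl (ps P j))); [apply Ht | chk3 |].
  eapply (G_prop _ _ _ _ (pp P (S j))); [apply Ht | chk3 |].
  eapply (G_prop _ _ _ _ (posl (pd P (pidx P j)))); [right; apply Hsd | chk3 |].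
  apply (chain_d P W); auto; try lia.
  - intros i Hi. apply (ns_between P W j); lia.
  - simpl; auto.
  - intros rho' Hi Hi'. pose proof (Hincl _ (mem_dS P (pidx P (S j)) ltac:(lia) ltac:(lia))) as Hd.
    apply (G_conflict _ _ _ _ Hd). chk3.
Qed.

Lemma rup_dt P (W : WF P) db j : incl (db0 P) db -> (1 <= j)%nat -> (j < pk P)%nat ->
  In (cl_h P j) db -> In (cl_dt P j) db -> In (cl_at P j) db ->
  G (pbneg (cl_dt P (S j)) :: db) [] (2 * (pidx P (S j) - pidx P j) + 8).
Proof.
  intros Hdb Hj1 Hj2 Hh Hdt Hat. assert (Hincl : incl (db0 P) (pbneg (cl_dt P (S j)) :: db)) by (apply incl_tl; auto).
  pose proof (seg P W j Hj1 Hj2).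
  gm (4 + ((S (0 + (pidx P (S j) - 1 - pidx P j))) + (pidx P (S j) - 1 - pidx P j)))%nat.
  eapply (G_prop _ _ _ _ (negl (pd P (pidx P (S j))))); [left; reflexivity | chk3 |].
  eapply (G_prop _ _ _ _ (negl (pt P (S j)))); [left; reflexivity | chk3 |].
  eapply (G_prop _ _ _ _ (negl (pt P j))); [right; apply Hh | chk3 |].
  eapply (G_prop _ _ _ _ (posl (pd P (pidx P j)))); [right; apply Hdt | chk3 |].
  apply (chain_d P W); auto; try lia.
  - intros i Hi. apply (ns_between P W j); lia.
  - simpl; auto.
  - intros rho' Hi Hi'. pose proof (Hincl _ (mem_dS P (pidx P (S j)) ltac:(lia) ltac:(lia))) as Hd.
    eapply (G_prop _ _ _ _ (posl (pa P (pidx P (S j) - 1)))); [apply Hd | chk3 |].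
    apply (chain_a P W); auto; try lia.
    + intros i Hi2. apply (ns_between P W j); lia.
    + simpl; auto.
    + intros rho'' Hi2 Hi2'. apply (G_conflict _ _ _ _ (in_cons _ _ _ Hat)). chk3.
Qed.

Lemma rup_at P (W : WF P) db j : incl (db0 P) db -> (1 <= j)%nat -> (S j < pk P)%nat ->
  In (cl_at P j) db ->
  G (pbneg (cl_at P (S j)) :: db) [] (2 * (pidx P (S j) - pidx P j) + 8).
Proof.
  intros Hdb Hj1 Hj2 Hat. assert (Hincl : incl (db0 P) (pbneg (cl_at P (S j)) :: db)) by (apply incl_tl; auto).
  pose proof (seg P W j Hj1 ltac:(lia)). pose proof (seg P W (S j) ltac:(lia) Hj2).
  gm (3 + (3 + (pidx P (S j) - 1 - pidx P j)))%nat.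
  eapply (G_prop _ _ _ _ (posl (pa P (pidx P (S j))))); [left; reflexivity | chk3 |].
  eapply (G_prop _ _ _ _ (negl (pt P (S j)))); [left; reflexivity | chk3 |].
  pose proof (Hincl _ (mem_aS P (pidx P (S j)) ltac:(lia) ltac:(lia))) as Ha.
  eapply (G_prop _ _ _ _ (posl (pa P (pidx P (S j) - 1)))); [apply Ha | chk3 |].
  apply (chain_a P W); auto; try lia.
  - intros i Hi. apply (ns_between P W j); lia.
  - simpl; auto.
  - intros rho' Hi Hi'.
    eapply (G_prop _ _ _ _ (posl (pt P j))); [right; apply Hat | chk3 |].
    pose proof (Hincl _ (mem_tS P W (S j) ltac:(lia) ltac:(lia))) as Ht.
    replace (S j - 1)%nat with j in Ht by lia.
    eapply (G_prop _ _ _ _ (lneg (qq P (S j)))); [apply Ht | chk3 |].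
    eapply (G_prop _ _ _ _ (pp P (S j))); [apply Ht | chk3 |].
    apply (G_conflict _ _ _ _ Ha). chk3.
Qed.

Lemma rup_sd P (W : WF P) db j : incl (db0 P) db -> (1 <= j)%nat -> (S j < pk P)%nat ->
  In (cl_sd P j) db ->
  G (pbneg (cl_sd P (S j)) :: db) [] (2 * (pidx P (S j) - pidx P j) + 8).
Proof.
  intros Hdb Hj1 Hj2 Hsd. assert (Hincl : incl (db0 P) (pbneg (cl_sd P (S j)) :: db)) by (apply incl_tl; auto).
  pose proof (seg P W j Hj1 ltac:(lia)). pose proof (seg P W (S j) ltac:(lia) Hj2).
  gm (4 + (2 + (pidx P (S j) - 1 - pidx P j)))%nat.
  eapply (G_prop _ _ _ _ (posl (ps P (S j)))); [left; reflexivity | chk3 |].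
  eapply (G_prop _ _ _ _ (negl (pd P (pidx P (S j))))); [left; reflexivity | chk3 |].
  pose proof (Hincl _ (mem_sS P W (S j) ltac:(lia) ltac:(lia))) as Hs.
  replace (S j - 1)%nat with j in Hs by lia.
  eapply (G_prop _ _ _ _ (posl (ps P j))); [apply Hs | chk3 |].
  eapply (G_prop _ _ _ _ (posl (pd P (pidx P j)))); [right; apply Hsd | chk3 |].
  apply (chain_d P W); auto; try lia.
  - intros i Hi. apply (ns_between P W j); lia.
  - simpl; auto.
  - intros rho' Hi Hi'. pose proof (Hincl _ (mem_dS P (pidx P (S j)) ltac:(lia) ltac:(lia))) as Hd.
    eapply (G_prop _ _ _ _ (lneg (pp P (S j)))); [apply Hd | chk3 |].
    eapply (G_prop _ _ _ _ (qq P (S j))); [apply Hd | chk3 |].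
    apply (G_conflict _ _ _ _ Hs). chk3.
Qed.

Lemma rup_bot P (W : WF P) db : incl (db0 P) db -> In (cl_dt P (pk P)) db ->
  G (pbneg (PBC [] 1) :: db) [] (pn P - pidx P (pk P) + 3).
Proof.
  intros Hdb Hdt. assert (Hincl : incl (db0 P) (pbneg (PBC [] 1) :: db)) by (apply incl_tl; auto).
  pose proof (idx_le_n P W (pk P) ltac:(pose proof (w_k P W); lia)). pose proof (w_ik P W). pose proof (w_k P W).
  gm (2 + (0 + (pn P - pidx P (pk P))))%nat.
  eapply (G_prop _ _ _ _ (negl (pt P (pk P)))); [apply Hincl, mem_tk | chk3 |].
  eapply (G_prop _ _ _ _ (posl (pd P (pidx P (pk P))))); [right; apply Hdt | chk3 |].
  apply (chain_d P W); auto; try lia.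
  - intros i Hi. apply (ns_after P W); lia.
  - simpl; auto.
  - intros rho' Hi Hi'. apply (G_conflict _ _ _ _ (Hincl _ (mem_dn P))). chk3.
Qed.

Definition props (ss : list step) := fold_right Nat.add 0%nat (map step_props ss).

Lemma props_app ss r m : props (ss ++ [RUPStep r m]) = (props ss + m)%nat.
Proof. unfold props. rewrite map_app, fold_right_app. simpl.
  induction (map step_props ss); simpl; lia. Qed.

Lemma push P ss r M : deriv_ok 0 (db0 P) ss ->
  G (pbneg r :: (db0 P ++ map step_result ss)) [] M ->
  exists m, (m <= M)%nat /\ deriv_ok 0 (db0 P) (ss ++ [RUPStep r m]).
Proof.
  intros H1 H2. destruct (rup_of_G _ _ _ H2) as [m [Hm Hr]]. exists m. split; auto.
  apply deriv_app. split; auto. simpl. auto.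
Qed.

Lemma push' P ss r M (Q : Prop) : deriv_ok 0 (db0 P) ss ->
  G (pbneg r :: (db0 P ++ map step_result ss)) [] M ->
  (forall m, (m <= M)%nat -> deriv_ok 0 (db0 P) (ss ++ [RUPStep r m]) -> Q) -> Q.
Proof. intros H1 H2 H3. destruct (push P ss r M H1 H2) as [m [A B]]. eauto. Qed.

Lemma incl_ext (db : list pbc) ss s : incl (db ++ map step_result ss) (db ++ map step_result (ss ++ [s])).
Proof. rewrite map_app, app_assoc. apply incl_appl, incl_refl. Qed.
Lemma in_last (db : list pbc) ss r m : In r (db ++ map step_result (ss ++ [RUPStep r m])).
Proof. rewrite map_app, app_assoc. apply in_or_app; right; simpl; auto. Qed.
Lemma incl_db0 (db : list pbc) ss : incl db (db ++ map step_result ss).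
Proof. apply incl_appl, incl_refl. Qed.

Definition Inv P j ss :=
  deriv_ok 0 (db0 P) ss /\ (length ss <= 4 * j)%nat /\ (props ss <= 8 * pidx P j + 40 * j)%nat /\
  In (cl_dt P j) (db0 P ++ map step_result ss) /\
  ((j < pk P)%nat -> In (cl_sd P j) (db0 P ++ map step_result ss) /\ In (cl_at P j) (db0 P ++ map step_result ss)).

Ltac in_s := first [ assumption | apply in_last | apply incl_ext; in_s ].
Ltac solve_in := first [ solve [apply incl_db0] | solve [lia] | solve [in_s] ].

Ltac pushr lem :=
  match goal with
  | H : deriv_ok 0 (db0 ?P) ?ss |- _ =>
    let m := fresh "m" in let Hm := fresh "Hm" in let Hd := fresh "Hd" in
    eapply (push' P ss); [ exact H | eapply lem; solve_in | intros m Hm Hd; clear H ]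
  end.

Ltac pushrj lem P W j :=
  match goal with
  | H : deriv_ok 0 (db0 P) ?ss |- _ =>
    let m := fresh "m" in let Hm := fresh "Hm" in let Hd := fresh "Hd" in
    eapply (push' P ss); [ exact H | eapply (lem P W _ j); solve_in | intros m Hm Hd; clear H ]
  end.

Lemma inv_base P (W : WF P) : exists ss, Inv P 1 ss.
Proof.
  pose proof (idx1_bound P W).
  assert (D0 : deriv_ok 0 (db0 P) []) by exact I.
  pushr (rup_dt1 P W).
  destruct (Nat.lt_ge_cases 1 (pk P)) as [Hk|Hk].
  - pushr (rup_sd1 P W).
    pushr (rup_at1 P W).
    eexists. split; [eassumption|]. split; [simpl; lia|]. split.
    { rewrite !props_app. simpl. lia. }
    split.
    + apply incl_ext. apply incl_ext. apply in_last.
    + intros _. split; [apply incl_ext, in_last| apply in_last].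
  - eexists. split; [eassumption|]. split; [simpl; lia|]. split.
    { rewrite !props_app. simpl. lia. }
    split; [apply in_last| intros; lia].
Qed.

Lemma inv_step P (W : WF P) j ss : (1 <= j)%nat -> (j < pk P)%nat -> Inv P j ss -> exists ss', Inv P (S j) ss'.
Proof.
  intros Hj1 Hj2 [D0 [HL [HP [Hdt Hsa]]]]. destruct (Hsa Hj2) as [Hsd Hat]. clear Hsa.
  pose proof (seg P W j Hj1 Hj2).
  pushrj rup_h P W j.
  pushrj rup_dt P W j.
  destruct (Nat.lt_ge_cases (S j) (pk P)) as [Hk|Hk].
  - pushrj rup_at P W j.
    pushrj rup_sd P W j.
    eexists. split; [eassumption|]. split; [rewrite !length_app; simpl; lia|]. split.
    { rewrite !props_app. lia. }
    split.
    + apply incl_ext, incl_ext, in_last.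
    + intros _. split; [apply in_last | apply incl_ext, in_last].
  - eexists. split; [eassumption|]. split; [rewrite !length_app; simpl; lia|]. split.
    { rewrite !props_app. lia. }
    split; [apply in_last| intros; lia].
Qed.

Lemma inv_all P (W : WF P) j : (1 <= j <= pk P)%nat -> exists ss, Inv P j ss.
Proof.
  induction j; intros H; [lia|].
  destruct (Nat.eq_dec j 0). { subst. apply inv_base; auto. }
  destruct IHj as [ss Hss]; [lia|]. apply (inv_step P W j ss); auto; lia.
Qed.

Lemma final P (W : WF P) : exists steps, deriv_ok 0 (db0 P) steps /\
  (length steps <= 5 * pk P)%nat /\ (props steps <= 60 * pn P)%nat /\
  exists r, In r (map step_result steps) /\ is_contradiction r.
Proof.
  pose proof (w_k P W). pose proof (w_ik P W). pose proof (w_n P W).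
  pose proof (idx_le_n P W (pk P) ltac:(lia)).
  destruct (inv_all P W (pk P) ltac:(lia)) as [ss [D0 [HL [HP [Hdt _]]]]].
  pushr (rup_bot P W).
  exists (ss ++ [RUPStep (PBC [] 1) m]). split; [eassumption|]. split; [rewrite length_app; simpl; lia|].
  split. { rewrite props_app. lia. }
  exists (PBC [] 1). split. { rewrite map_app. apply in_or_app; right; simpl; auto. }
  split; [intros w; reflexivity | reflexivity].
Qed.

Theorem lemma15 :
  exists (c1 c2 B : nat),
  forall (n : nat) (xs : nat -> var) (sg : lit -> lit) (k : nat) (idx : nat -> nat)
         (C D : list pbc) (a d s t : nat -> var),
    (1 <= n)%nat ->
    NoDup (map xs (seq 1 n)) ->
    is_symmetry sg C ->
    (1 <= k)%nat ->
    (1 <= idx 1%nat)%nat -> (idx k <= n)%nat ->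
    (forall j, (1 <= j)%nat -> (j < k)%nat -> (idx j < idx (S j))%nat) ->
    (forall v, in_support sg v <-> exists j, (1 <= j <= k)%nat /\ v = xs (idx j)) ->
    (* freshness of the auxiliary variables *)
    (let aux := map a (seq 1 n) ++ map d (seq 1 n) ++
                map s (seq 1 (Nat.max 1 (k - 1))) ++ map t (seq 1 k) in
     NoDup aux /\
     (forall y, In y aux -> ~ In y (map xs (seq 1 n)) /\ ~ occurs y C)) ->
    (forall i, (1 <= i <= n)%nat -> ~ occurs (a i) D /\ ~ occurs (d i) D) ->
    (* D contains the circuit constraints for sg *)
    incl (circuit k (fun j => posl (xs (idx j))) (fun j => sg (posl (xs (idx j)))) s t) D ->
    exists steps : list step,
      deriv_ok B
        (C ++ D ++ [pbneg (PBC [(1, posl (t k))] 1)] ++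
         lexS n (fun i => sg (posl (xs i))) (fun i => posl (xs i)) a d ++
         [pbneg (PBC [(1, posl (d n))] 1)]) steps /\
      (length steps <= c1 * k)%nat /\
      (fold_right Nat.add 0%nat (map step_props steps) <= c2 * n)%nat /\
      exists r, In r (map step_result steps) /\ is_contradiction r.
Proof.
  exists 5%nat, 60%nat, 0%nat.
  intros n xs sg k idx C D a d s t Hn Hnd Hsym Hk Hi1 Hik Hmono Hsupp _ _ Hcirc.
  pose (P := mkPar n xs sg k idx C D a d s t).
  assert (W : WF P) by (constructor; simpl; auto).
  destruct (final P W) as [steps [H1 [H2 [H3 H4]]]].
  exists steps. split; [exact H1|]. split; [exact H2|]. split; [exact H3|exact H4].
Qed.
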